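(* Let $\mathcal{A}$ be an abelian normed algebra, $n\in\mathbb{N}$ and $x_1,\dots,x_n\in\mathcal{A}$. Then the product $x_1x_2\cdots x_n$ is boundedly approximately invertible in $\mathcal{A}$ if and only if each $x_k$, $k=1,\dots,n$, is boundedly approximately invertible in $\mathcal{A}$.
   Context: An approximate identity in $\mathcal{A}$ is a net $(e_j)_{j\in J}$ with $\lim_j e_jy=\lim_j ye_j=y$ for all $y\in\mathcal{A}$; it is norm bounded if $\sup_j\|e_j\|<\infty$. In an abelian normed algebra, $x\in\mathcal{A}$ is boundedly approximately invertible if there is a net $(r_j)_{j\in J}$ in $\mathcal{A}$ such that $(xr_j)_{j\in J}$ is a norm bounded approximate identity in $\mathcal{A}$. *)

(* Defs.v *)
From HB Require Import structures.
From mathcomp Require Import all_boot all_order all_algebra.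
From mathcomp Require Import all_classical all_reals.
From mathcomp Require Import topology normedtype.
Set Implicit Arguments. Unset Strict Implicit. Unset Printing Implicit Defensive.
Import Order.TTheory GRing.Theory Num.Theory.
Import numFieldNormedType.Exports.
Local Open Scope ring_scope.

Record abelian_normed_algebra (K : numFieldType) (A : normedModType K)
    (mul : A -> A -> A) : Prop := {
  mulA_ : forall x y z, mul x (mul y z) = mul (mul x y) z;
  mulC_ : forall x y, mul x y = mul y x;
  mulDl_ : forall x y z, mul (x + y) z = mul x z + mul y z;
  mulZl_ : forall (a : K) x y, mul (a *: x) y = a *: mul x y;
  normM_ : forall x y, `|mul x y| <= `|x| * `|y|
}.

Record directed (J : Type) (le : J -> J -> Prop) : Prop := {
  dir_nonempty : inhabited J;
  dir_refl : forall j, le j j;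
  dir_trans : forall i j k, le i j -> le j k -> le i k;
  dir_ub : forall i j, exists k, le i k /\ le j k
}.

Definition net_lim (K : numFieldType) (A : normedModType K) (J : Type)
    (le : J -> J -> Prop) (f : J -> A) (y : A) : Prop :=
  forall eps : K, 0 < eps -> exists j0, forall j, le j0 j -> `|f j - y| < eps.

Definition approx_identity (K : numFieldType) (A : normedModType K)
    (mul : A -> A -> A) (J : Type) (le : J -> J -> Prop) (e : J -> A) : Prop :=
  forall y : A, net_lim le (fun j => mul (e j) y) y /\
                net_lim le (fun j => mul y (e j)) y.

Definition norm_bounded (K : numFieldType) (A : normedModType K) (J : Type)
    (e : J -> A) : Prop :=
  exists M : K, forall j, `|e j| <= M.

Definition bdd_approx_invertible (K : numFieldType) (A : normedModType K)
    (mul : A -> A -> A) (x : A) : Prop :=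
  exists (J : Type) (le : J -> J -> Prop) (r : J -> A),
    directed le /\
    approx_identity mul le (fun j => mul x (r j)) /\
    norm_bounded (fun j => mul x (r j)).

(* The product x_0 x_1 ... x_n (n+1 factors). *)
Fixpoint prod_upto (A : Type) (mul : A -> A -> A) (x : nat -> A) (n : nat) : A :=
  match n with
  | 0 => x 0
  | m.+1 => mul (prod_upto mul x m) (x m.+1)
  end.

(* Main.v *)
Require Import Defs.
From mathcomp Require Import all_boot all_order all_algebra.
From mathcomp Require Import all_classical all_reals.
From mathcomp Require Import topology normedtype.
Import Order.TTheory GRing.Theory Num.Theory.
Import numFieldNormedType.Exports.
Local Open Scope ring_scope.

Section Helpers.
Variables (K : numFieldType) (A : normedModType K) (mul : A -> A -> A).
Hypothesis hA : abelian_normed_algebra mul.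

Lemma mulBr_ (e u v : A) : mul e (u - v) = mul e u - mul e v.
Proof.
have m0 : forall w, mul 0 w = 0.
  move=> w; have h := mulDl_ hA 0 0 w; rewrite addr0 in h.
  by apply: (addrI (mul 0 w)); rewrite -h addr0.
have mN : forall a w, mul (- a) w = - mul a w.
  move=> a w; apply/eqP; rewrite -subr_eq0 opprK -(mulDl_ hA) addNr m0 //.

by rewrite (mulC_ hA) (mulDl_ hA) mN (mulC_ hA) [mul v e](mulC_ hA).
Qed.

Lemma bai_l (x y : A) : bdd_approx_invertible mul (mul x y) ->
  bdd_approx_invertible mul x.
Proof.
move=> [J [le [r [hd [hai hb]]]]].
exists J, le, (fun j => mul y (r j)).
have -> : (fun j => mul x (mul y (r j))) = (fun j => mul (mul x y) (r j)).
  by apply: funext => j; rewrite (mulA_ hA).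
by [].
Qed.

Lemma bai_r (x y : A) : bdd_approx_invertible mul (mul x y) ->
  bdd_approx_invertible mul y.
Proof. by rewrite (mulC_ hA); apply: bai_l. Qed.

Lemma bai_mul (x y : A) : bdd_approx_invertible mul x ->
  bdd_approx_invertible mul y -> bdd_approx_invertible mul (mul x y).
Proof.
move=> [J1 [le1 [r1 [hd1 [hai1 [M1 hb1]]]]]].
move=> [J2 [le2 [r2 [hd2 [hai2 [M2 hb2]]]]]].
set e := fun j => mul x (r1 j) in hai1 hb1.
set f := fun j => mul y (r2 j) in hai2 hb2.
have [j1] := dir_nonempty hd1.
have [j2'] := dir_nonempty hd2.
have M1ge0 : 0 <= M1 by apply: le_trans (hb1 j1).
have M2ge0 : 0 <= M2 by apply: le_trans (hb2 j2').
pose lep := fun a b : J1 * J2 => le1 a.1 b.1 /\ le2 a.2 b.2.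
exists (J1 * J2)%type, lep, (fun p => mul (r1 p.1) (r2 p.2)).
have eq : (fun p : J1 * J2 => mul (mul x y) (mul (r1 p.1) (r2 p.2)))
   = (fun p => mul (e p.1) (f p.2)).
  apply: funext => p; rewrite /e /f.
  rewrite !(mulA_ hA); congr (mul _ _).
  rewrite -!(mulA_ hA); congr (mul _ _); exact: (mulC_ hA).
rewrite eq; split; [|split].
- split.
  + by constructor; exact: (j1, j2').
  + by move=> p; split; [exact: (dir_refl hd1 _)|exact: (dir_refl hd2 _)].
  + move=> a b c [h1 h2] [h3 h4]; split;
      [exact: (dir_trans hd1 h1 h3)|exact: (dir_trans hd2 h2 h4)].
  + move=> a b.
    have [k1 [ha1 hb1']] := dir_ub hd1 a.1 b.1.
    have [k2 [ha2 hb2']] := dir_ub hd2 a.2 b.2.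
    by exists (k1, k2).
- have left : forall z, net_lim lep (fun p => mul (mul (e p.1) (f p.2)) z) z.
    move=> z eps heps.
    have hM : 0 < M1 + 1 by rewrite ltr_wpDl.
    have he2 : 0 < eps / 2 by rewrite divr_gt0.
    have [i0 hi0] := (hai1 z).1 _ he2.
    have [k0 hk0] := (hai2 z).1 (eps / 2 / (M1 + 1)) (divr_gt0 he2 hM).
    exists (i0, k0) => p [hp1 hp2].
    have -> : mul (mul (e p.1) (f p.2)) z - z =
       mul (e p.1) (mul (f p.2) z - z) + (mul (e p.1) z - z).
      by rewrite mulBr_ (mulA_ hA) addrA subrK.
    apply: le_lt_trans (ler_normD _ _) _.
    rewrite [eps]splitr; apply: ltrD; last first.
      exact: (hi0 _ hp1).
    apply: le_lt_trans (normM_ hA _ _) _.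
    have hw := hk0 _ hp2.
    apply: (@le_lt_trans _ _ ((M1 + 1) * `|mul (f p.2) z - z|)).
      apply: ler_wpM2r; first exact: normr_ge0.
      by apply: le_trans (hb1 _) _; rewrite lerDl.
    by rewrite mulrC -ltr_pdivlMr.
  move=> z; split; first exact: left.
  move=> eps heps; have [j0 hj0] := left z eps heps; exists j0 => p hp.
  by rewrite (mulC_ hA); apply: hj0.
- exists (M1 * M2) => p.
  apply: le_trans (normM_ hA _ _) _.
  by apply: ler_pM; [exact: normr_ge0|exact: normr_ge0|exact: hb1|exact: hb2].
Qed.

End Helpers.

Theorem proposition2p19 (K : numFieldType) (A : normedModType K)
    (mul : A -> A -> A) (hA : abelian_normed_algebra mul)
    (n : nat) (x : nat -> A) :
  bdd_approx_invertible mul (prod_upto mul x n) <->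
  (forall k : nat, (k <= n)%N -> bdd_approx_invertible mul (x k)).
Proof.
elim: n => [|n IH] /=.
  split; first by move=> h k; rewrite leqn0 => /eqP ->.
  by move=> h; apply: h.
split.
- move=> h k hk.
  have h1 := @bai_l _ _ _ hA _ _ h; have h2 := @bai_r _ _ _ hA _ _ h.
  move: hk; rewrite leq_eqVlt => /orP [/eqP -> //|hk].
  by apply: (IH.1 h1).
- move=> h; apply: (@bai_mul _ _ _ hA); last exact: h.
  by apply: IH.2 => k hk; apply: h; apply: leqW.
Qed.
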